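(* Let $\mathbf A$ be a finite subdirectly irreducible cBCK-algebra and let $a$ be an atom of $\mathbf A$. Then $\mathbf A$ is generated (as a cBCK-algebra) by the set $\mathrm{m}(\mathbf A) \cup \{a\}$.
   Context: A BCK-algebra is an algebra $(A,\ominus,0)$ of type $(2,0)$ satisfying $((x\ominus y)\ominus(x\ominus z))\ominus(z\ominus y)=0$, $x\ominus 0=x$, $0\ominus x=0$, and the quasi-identity ($x\ominus y=0$ and $y\ominus x=0$ imply $x=y$). It is partially ordered by $x\le y$ iff $x\ominus y=0$; $0$ is the least element. A cBCK-algebra (commutative BCK-algebra) is a BCK-algebra additionally satisfying $x\ominus(x\ominus y)=y\ominus(y\ominus x)$; cBCK-algebras form a variety, and the order is a meet-semilattice with $x\wedge y=x\ominus(x\ominus y)$. It is known that a finite nontrivial subdirectly irreducible cBCK-algebra has a unique atom and, as a poset, is a rooted tree with root $0$. $\mathrm{m}(\mathbf A)$ denotes the set of maximal elements of $\mathbf A$. *)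

(* Defs.v *)
From mathcomp Require Import all_boot.
Set Implicit Arguments. Unset Strict Implicit. Unset Printing Implicit Defensive.

Definition is_BCK (T : Type) (sub : T -> T -> T) (zero : T) : Prop :=
  (forall x y z, sub (sub (sub x y) (sub x z)) (sub z y) = zero) /\
  (forall x, sub x zero = x) /\
  (forall x, sub zero x = zero) /\
  (forall x y, sub x y = zero -> sub y x = zero -> x = y).

Definition is_cBCK (T : Type) (sub : T -> T -> T) (zero : T) : Prop :=
  is_BCK sub zero /\ (forall x y, sub x (sub x y) = sub y (sub y x)).

Definition bck_le (T : Type) (sub : T -> T -> T) (zero : T) (x y : T) : Prop :=
  sub x y = zero.

Definition is_congruence (T : Type) (sub : T -> T -> T) (th : T -> T -> Prop) : Prop :=
  (forall x, th x x) /\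
  (forall x y, th x y -> th y x) /\
  (forall x y z, th x y -> th y z -> th x z) /\
  (forall x x' y y', th x x' -> th y y' -> th (sub x y) (sub x' y')).

(* Subdirectly irreducible: nontrivial and the intersection of all
   congruences different from the identity congruence is not the identity. *)
Definition subdirectly_irreducible (T : Type) (sub : T -> T -> T) : Prop :=
  exists x y : T, x <> y /\
    forall th, is_congruence sub th ->
      (exists u v, u <> v /\ th u v) -> th x y.

Definition subalg_closed (T : Type) (sub : T -> T -> T) (zero : T) (B : T -> Prop) : Prop :=
  B zero /\ (forall x y, B x -> B y -> B (sub x y)).

Definition generated (T : Type) (sub : T -> T -> T) (zero : T) (S : T -> Prop) (x : T) : Prop :=
  forall B, subalg_closed sub zero B -> (forall s, S s -> B s) -> B x.

Definition is_maximal (T : Type) (sub : T -> T -> T) (zero : T) (x : T) : Prop :=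
  forall y, bck_le sub zero x y -> y = x.

Definition is_atom (T : Type) (sub : T -> T -> T) (zero : T) (a : T) : Prop :=
  a <> zero /\ forall y, bck_le sub zero y a -> y = zero \/ y = a.

(* Main.v *)
Require Import Defs.
From mathcomp Require Import all_boot.
Set Implicit Arguments. Unset Strict Implicit.

Section Aux.
Lemma bck_facts (T : Type) (sub : T -> T -> T) (zero : T) (HA : is_cBCK sub zero) :
  (forall x, sub x x = zero) /\
  (forall x y z, sub x y = zero -> sub y z = zero -> sub x z = zero) /\
  (forall x y z, sub z y = zero -> sub (sub x y) (sub x z) = zero) /\
  (forall x y, sub (sub x y) x = zero) /\
  (forall x z, sub (sub x (sub x z)) z = zero) /\
  (forall x y z, sub x y = zero -> sub (sub x z) (sub y z) = zero) /\
  (forall x y z, sub (sub x y) z = sub (sub x z) y) /\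
  (forall u p q, sub u p = zero -> sub u q = zero -> sub u (sub p (sub p q)) = zero).
Proof.
case: HA => [[H1 [H2 [H3 H4]]] Hc].
have subxx : forall x, sub x x = zero.
  move=> x; have := H1 x zero zero; by rewrite !H2.
have trans : forall x y z, sub x y = zero -> sub y z = zero -> sub x z = zero.
  move=> x y z Hxy Hyz; have := H1 x z y; by rewrite Hxy Hyz !H2.
have anti2 : forall x y z, sub z y = zero -> sub (sub x y) (sub x z) = zero.
  move=> x y z Hzy; have := H1 x y z; by rewrite Hzy H2.
have subl : forall x y, sub (sub x y) x = zero.
  move=> x y; have := anti2 x y zero (H3 y); by rewrite H2.
have meetl : forall x z, sub (sub x (sub x z)) z = zero.
  move=> x z; have := H1 x zero z; by rewrite !H2.
have mono1 : forall x y z, sub x y = zero -> sub (sub x z) (sub y z) = zero.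
  move=> x y z Hxy; have := H1 x z y; by rewrite Hxy H2.
have exch1 : forall x y z, sub (sub (sub x y) z) (sub (sub x z) y) = zero.
  move=> x y z; apply: (trans _ (sub (sub x y) (sub x (sub x z)))).
    by apply: anti2; apply: meetl.
  exact: H1.
do 7 split => //.
  by move=> x y z; apply: H4; apply: exch1.
move=> u p q Hup Huq.
have h1 := anti2 p q u Huq.
have h2 := anti2 p (sub p u) (sub p q) h1.
by move: h2; rewrite Hc Hup H2.
Qed.

Definition ideal (T : Type) (sub : T -> T -> T) (zero : T) (I : T -> Prop) :=
  I zero /\ forall x y, I (sub x y) -> I y -> I x.

Definition theta (T : Type) (sub : T -> T -> T) (I : T -> Prop) (x y : T) :=
  I (sub x y) /\ I (sub y x).

Lemma theta_cong (T : Type) (sub : T -> T -> T) (zero : T) (HA : is_cBCK sub zero)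
  (I : T -> Prop) (HI : ideal sub zero I) : is_congruence sub (theta sub I).
Proof.
have [subxx [trans [anti2 [subl [meetl [mono1 [exch lemeet]]]]]]] := bck_facts HA.
case: HA => [[H1 [H2 [H3 H4]]] Hc].
case: HI => [I0 Icl].
have down : forall x y, I y -> sub x y = zero -> I x.
  by move=> x y Iy Hxy; apply: (Icl x y) => //; rewrite Hxy.
have thtr : forall x y z, theta sub I x y -> theta sub I y z -> theta sub I x z.
  move=> x y z [a1 a2] [b1 b2]; split.
    apply: (Icl _ (sub x y)) => //; apply: (down _ (sub y z)) => //; exact: H1.
  apply: (Icl _ (sub z y)) => //; apply: (down _ (sub y x)) => //; exact: H1.
have R : forall x y y', theta sub I y y' -> theta sub I (sub x y) (sub x y').
  move=> x y y' [a1 a2]; split.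
    apply: (down _ (sub y' y)) => //; exact: H1.
  apply: (down _ (sub y y')) => //; exact: H1.
have L : forall x x' y, theta sub I x x' -> theta sub I (sub x y) (sub x' y).
  move=> x x' y [a1 a2]; split.
    apply: (Icl _ (sub x x')) => //; apply: (down _ zero) => //.
    by rewrite H2 exch; apply: H1.
  apply: (Icl _ (sub x' x)) => //; apply: (down _ zero) => //.
  by rewrite H2 exch; apply: H1.
split; first by move=> x; split; rewrite subxx.
split; first by move=> x y [? ?]; split.
split; first exact: thtr.
move=> x x' y y' Hx Hy; apply: (thtr _ (sub x y')); [exact: R | exact: L].
Qed.

Definition ann (T : Type) (sub : T -> T -> T) (zero : T) (X : T -> Prop) (y : T) :=
  forall x, X x -> sub y (sub y x) = zero.

Lemma ann_ideal (T : Type) (sub : T -> T -> T) (zero : T) (HA : is_cBCK sub zero)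
  (X : T -> Prop) : ideal sub zero (ann sub zero X).
Proof.
have [subxx [trans [anti2 [subl [meetl [mono1 [exch lemeet]]]]]]] := bck_facts HA.
case: HA => [[H1 [H2 [H3 H4]]] Hc].
split; first by move=> x _; rewrite !H3.
move=> y z Hyz Hz x Xx.
set w := sub y (sub y x).
have wy : sub w y = zero by apply: subl.
have wx : sub w x = zero by rewrite /w Hc; apply: subl.
have wz1 : sub (sub w z) (sub (sub y z) (sub (sub y z) x)) = zero.
  apply: lemeet; first exact: mono1.
  apply: (trans _ w) => //; exact: subl.
rewrite (Hyz x Xx) H2 in wz1.
have wz : sub w z = zero by [].
have := lemeet w z x wz wx.
by rewrite (Hz x Xx) H2.
Qed.

Lemma atom_below (T : Type) (sub : T -> T -> T) (zero : T)
  (HA : is_cBCK sub zero) (HSI : subdirectly_irreducible sub)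
  (a : T) (Ha : is_atom sub zero a) (s : T) : s <> zero -> sub a s = zero.
Proof.
move=> s0.
have HA' := HA.
have [subxx [trans [anti2 [subl [meetl [mono1 [exch lemeet]]]]]]] := bck_facts HA.
case: HA => [[H1 [H2 [H3 H4]]] Hc].
case: Ha => [a0 Hat].
case: (Hat (sub a (sub a s)) (subl _ _)) => Hm; last first.
  by have := meetl a s; rewrite Hm.
exfalso.
set I := ann sub zero (fun x => x = s).
set J := ann sub zero I.
have cI := theta_cong HA' (ann_ideal HA' (fun x => x = s)).
have cJ := theta_cong HA' (ann_ideal HA' I).
case: HSI => p [q [pq Hpq]].
have tI : theta sub I p q.
  apply: Hpq => //; exists a, zero; split => //.
  rewrite /theta H2 H3; split; first by move=> x ->.
  by move=> x _; rewrite !H3.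
have tJ : theta sub J p q.
  apply: Hpq => //; exists s, zero; split => //.
  rewrite /theta H2 H3; split; first by move=> x Ix; rewrite Hc; apply: Ix.
  by move=> x _; rewrite !H3.
have IJ : forall x, I x -> J x -> x = zero.
  by move=> x Ix Jx; have := Jx x Ix; rewrite subxx H2.
case: tI => [i1 i2]; case: tJ => [j1 j2].
by apply: pq; apply: H4; apply: IJ.
Qed.
End Aux.

Theorem mainTheorem1 (T : finType) (sub : T -> T -> T) (zero : T)
  (HA : is_cBCK sub zero) (HSI : subdirectly_irreducible sub)
  (a : T) (Ha : is_atom sub zero a) :
  forall x : T, generated sub zero (fun y => is_maximal sub zero y \/ y = a) x.
Proof.
have A := atom_below HA HSI Ha.
have HA' := HA.
have [subxx [trans [anti2 [subl [meetl [mono1 [exch lemeet]]]]]]] := bck_facts HA.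
case: HA => [[H1 [H2 [H3 H4]]] Hc].
have a0 : a <> zero by case: Ha.
move=> x B [B0 Bcl] Bgen.
have Ba : B a by apply: Bgen; right.
pose D s := [set y | sub y s == zero].
have step : forall s y, s <> zero -> sub y s = zero -> y <> s -> sub y (sub s a) = zero.
  move=> s y s0 ys yns.
  case: (eqVneq (sub s y) zero) => [sy|sy]; first by case: yns; apply: H4.
  have := anti2 s (sub s y) a (A _ (elimN eqP sy)).
  by rewrite Hc ys H2.
have sa_lt : forall s, s <> zero -> #|D (sub s a)| < #|D s|.
  move=> s s0; apply: proper_card; apply/properP; split.
    apply/subsetP => y; rewrite !inE => /eqP h; apply/eqP.
    exact: (trans _ (sub s a)).
  exists s; rewrite !inE ?subxx //.
  apply/eqP => h.
  have e : sub s a = s by apply: H4 => //; apply: subl.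
  have := Hc s a; rewrite e subxx (A _ s0) H2 => e'.
  by apply: a0.
have main : forall n s, #|D s| <= n -> B s -> forall y, sub y s = zero -> B y.
  elim => [|n IH] s.
    move=> h; have hs : s \in D s by rewrite inE subxx.
    by rewrite leqn0 (cardD1 s) hs in h.
  move=> hn Bs y ys.
  case: (eqVneq y s) => [->|yns] //.
  case: (eqVneq s zero) => [s0|s0].
    by move: ys; rewrite s0 H2 => ->.
  apply: (IH (sub s a)); last exact: (step s y (elimN eqP s0) ys (elimN eqP yns)).
    by rewrite -ltnS; apply: leq_trans hn; apply: sa_lt; apply/eqP.
  exact: Bcl.
case: (@arg_maxnP T x (fun m => sub x m == zero) (fun m => #|D m|)).
  by rewrite subxx.
move=> m /eqP xm Hmax.
apply: (main #|D m| m (leqnn _)); last exact: xm.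
apply: Bgen; left => y my.
have sub1 : D m \subset D y.
  by apply/subsetP => z; rewrite !inE => /eqP h; apply/eqP; apply: (trans _ m).
have := Hmax y; rewrite (trans _ _ _ xm my) eqxx => /(_ isT) hle.
have e : D m = D y.
  by apply/eqP; rewrite eqEcard sub1 /=; exact: hle.
have : y \in D m by rewrite e inE subxx.
rewrite inE => /eqP ym.
by apply: H4.
Qed.
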